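(* Let $\eta>0$, $\beta\in[0,1)$ and $\lambda_i$ with $\eta\lambda_i>0$. Define ${\mathcal{M}}_i:\mathbb{S}^2\to\mathbb{S}^2$ by ${\mathcal{M}}_i({\bm{X}}):={\bm{A}}_i{\bm{X}}{\bm{A}}_i^\top+\eta^2\lambda_i^2({\bm{X}})_{11}{\bm{Q}}$, where ${\bm{A}}_i=\begin{bmatrix}1-\eta\lambda_i&-\beta\\ \eta\lambda_i&\beta\end{bmatrix}$ and ${\bm{Q}}=\begin{bmatrix}1&-1\\-1&1\end{bmatrix}$. Then: (a) $\rho({\mathcal{M}}_i)<1$ if and only if $\eta\lambda_i<1-\beta^2$; (b) if $\eta\lambda_i<1-\beta^2$, then $\mathrm{Id}-{\mathcal{M}}_i$ is invertible and $(\mathrm{Id}-{\mathcal{M}}_i)^{-1}(\mathbb{S}^2_+)\subseteq\mathbb{S}^2_+$; (c) if $\eta\lambda_i<1-\beta^2$, then ${\bm{Y}}_i:=(\mathrm{Id}-{\mathcal{M}}_i)^{-1}{\bm{Q}}\in\mathbb{S}^2_+$ and $\gamma_i:=({\bm{Y}}_i)_{11}=\dfrac{1+\beta}{2\eta\lambda_i(1-\beta^2-\eta\lambda_i)}$.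
   Context: $\mathbb{S}^2$ denotes the space of real symmetric $2\times2$ matrices and $\mathbb{S}^2_+$ the cone of positive semidefinite ones; $\rho(\cdot)$ denotes spectral radius and $\mathrm{Id}$ the identity map. *)

(* Defs.v *)
From HB Require Import structures.
From mathcomp Require Import all_boot all_order all_algebra.
From mathcomp Require Import classical_sets reals.
From mathcomp Require Import complex.
Set Implicit Arguments. Unset Strict Implicit. Unset Printing Implicit Defensive.
Import Order.TTheory GRing.Theory Num.Theory.
Local Open Scope ring_scope.
Local Open Scope classical_set_scope.

Section Defs.
Variable R : realType.

Definition spectral_radius n (A : 'M[R]_n) : R :=
  sup [set Normc.normc z | z in [set z : R[i] |
         root (char_poly (map_mx (fun x : R => x%:C%C) A)) z]].

Definition mx2 (a b c d : R) : 'M[R]_2 :=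
  \matrix_(i < 2, j < 2)
    if (i : nat) == 0%N then (if (j : nat) == 0%N then a else b)
    else (if (j : nat) == 0%N then c else d).

Definition sym2 (X : 'M[R]_2) : Prop := X^T = X.
Definition psd2 (X : 'M[R]_2) : Prop :=
  X^T = X /\ forall v : 'cV[R]_2, 0 <= (v^T *m X *m v) 0 0.

Definition Amx (eta beta lambda : R) : 'M[R]_2 :=
  mx2 (1 - eta * lambda) (- beta) (eta * lambda) beta.
Definition Qmx : 'M[R]_2 := mx2 1 (-1) (-1) 1.

Definition Mop (eta beta lambda : R) (X : 'M[R]_2) : 'M[R]_2 :=
  Amx eta beta lambda *m X *m (Amx eta beta lambda)^T
  + (eta ^+ 2 * lambda ^+ 2 * X 0 0) *: Qmx.

Definition sym_basis (j : 'I_3) : 'M[R]_2 :=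
  if (j : nat) == 0%N then delta_mx 0 0
  else if (j : nat) == 1%N then delta_mx 0 1 + delta_mx 1 0
  else delta_mx 1 1.
Definition sym_coord (i : 'I_3) (X : 'M[R]_2) : R :=
  if (i : nat) == 0%N then X 0 0
  else if (i : nat) == 1%N then X 0 1
  else X 1 1.

(* Matrix (in the above basis) of a map f : S^2 -> S^2, i.e. of the
   restriction to S^2 of a map on 2x2 matrices preserving symmetry. *)
Definition sym_opmx (f : 'M[R]_2 -> 'M[R]_2) : 'M[R]_3 :=
  \matrix_(i < 3, j < 3) sym_coord i (f (sym_basis j)).

Definition op_spectral_radius (f : 'M[R]_2 -> 'M[R]_2) : R :=
  spectral_radius (sym_opmx f).

End Defs.

(* Main.v *)
Require Import Defs.
From HB Require Import structures.
From mathcomp Require Import all_boot all_order all_algebra.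
From mathcomp Require Import classical_sets reals.
From mathcomp Require Import complex.
From mathcomp Require Import boolp.
From mathcomp Require Import polyrcf.
From mathcomp Require Import ring lra.
Import Order.TTheory GRing.Theory Num.Theory.
Local Open Scope ring_scope.
Lemma bern {R : realType} (h : R) n : 0 <= h -> 1 + n%:R * h <= (1 + h)^+n.
Proof.
move=> h0; elim: n => [|n IH]; first by rewrite expr0 mul0r addr0.
rewrite exprSr -natr1.
have : 0 <= n%:R * h * h by apply: mulr_ge0 => //; apply: mulr_ge0.
have : (1 + n%:R * h) * (1 + h) <= (1 + h) ^+ n * (1+h) by apply: ler_wpM2r => //; lra.
nra.
Qed.

Lemma geo_small (R : realType) (th e : R) : 0 <= th -> th < 1 -> 0 < e ->
  exists n, th ^+ n < e.
Proof.
move=> th0 th1 e0; have [->|thn0] := eqVneq th 0.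
  by exists 1%N; rewrite expr1.
have thp : 0 < th by rewrite lt_def thn0.
set h := th^-1 - 1.
have hp : 0 < h by rewrite /h subr_gt0 invf_gt1.
set n := Num.Def.archi_bound ((h * e)^-1).
have hn : (h * e)^-1 < n%:R by apply: archi_boundP; rewrite invr_ge0; apply: mulr_ge0; lra.
exists n.
have hb := @bern _ h n (ltW hp).
have e1 : 1 + h = th^-1 by rewrite /h; ring.
rewrite e1 in hb.
have he : 0 < h * e by apply: mulr_gt0.
have h1 : 1 < n%:R * (h * e).
  by rewrite -[X in X < _](mulVf (lt0r_neq0 he)) ltr_pM2r.
have h2 : 1 < th^-1 ^+ n * e.
  have : n%:R * h * e < (1 + n%:R * h) * e by rewrite ltr_pM2r //; lra.
  have : (1 + n%:R * h) * e <= th^-1 ^+ n * e by apply: ler_wpM2r => //; lra.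
  rewrite -mulrA in h1 *; lra.
have thnp : 0 < th ^+ n by apply: exprn_gt0.
rewrite exprVn in h2.
have : th ^+ n * 1 < th ^+ n * ((th ^+ n)^-1 * e) by rewrite ltr_pM2l.
by rewrite mulr1 mulrA mulfV ?mul1r // lt0r_neq0.
Qed.

Lemma o20 : (0 : 'I_2) = ord0. Proof. by apply/val_inj. Qed.
Lemma o21 : (1 : 'I_2) = lift ord0 ord0. Proof. by apply/val_inj. Qed.

Ltac mxs := rewrite ?o20 ?o21 /=; rewrite !mxE ?big_ord_recl ?big_ord0 /=; 
  rewrite ?mxE ?big_ord_recl ?big_ord0 /= ?mxE /=.

Section S.
Variable R : realType.
Variables eta beta lambda : R.
Local Notation a := (eta * lambda).
Local Notation b := beta.

Lemma Mop00 (X : 'M[R]_2) : Mop eta beta lambda X 0 0 =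
  (1-a)^+2 * X 0 0 - (1-a)*b * (X 0 1 + X 1 0) + b^+2 * X 1 1 + a^+2 * X 0 0.
Proof. rewrite /Mop /Amx /Qmx /mx2; mxs; ring. Qed.
Lemma Mop01 (X : 'M[R]_2) : Mop eta beta lambda X 0 1 =
  (1-a)*a * X 0 0 + (1-a)*b* X 0 1 - b*a* X 1 0 - b^+2 * X 1 1 - a^+2 * X 0 0.
Proof. rewrite /Mop /Amx /Qmx /mx2; mxs; ring. Qed.
Lemma Mop10 (X : 'M[R]_2) : Mop eta beta lambda X 1 0 =
  (1-a)*a * X 0 0 - a*b* X 0 1 + b*(1-a)* X 1 0 - b^+2 * X 1 1 - a^+2 * X 0 0.
Proof. rewrite /Mop /Amx /Qmx /mx2; mxs; ring. Qed.
Lemma Mop11 (X : 'M[R]_2) : Mop eta beta lambda X 1 1 =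
  a^+2 * X 0 0 + a*b* (X 0 1 + X 1 0) + b^+2 * X 1 1 + a^+2 * X 0 0.
Proof. rewrite /Mop /Amx /Qmx /mx2; mxs; ring. Qed.

Definition qf (X : 'M[R]_2) s t := X 0 0 * s^+2 + (X 0 1 + X 1 0) * s * t + X 1 1 * t^+2.

Lemma qfE X (v : 'cV[R]_2) : (v^T *m X *m v) 0 0 = qf X (v 0 0) (v 1 0).
Proof. rewrite /qf; mxs; ring. Qed.

Lemma psd2P X : X^T = X -> (forall s t, 0 <= qf X s t) -> psd2 X.
Proof. by move=> hs h; split => // v; rewrite qfE. Qed.

Lemma psd2_qf X : psd2 X -> forall s t, 0 <= qf X s t.
Proof.
move=> [_ h] s t; have := h (\col_(i < 2) (if (i : nat) == 0%N then s else t)).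
by rewrite qfE !mxE /=.
Qed.

Lemma qfM X s t : qf (Mop eta beta lambda X) s t =
  qf X ((1-a)*s + a*t) (b*(t-s)) + a^+2 * X 0 0 * (s-t)^+2.
Proof. rewrite /qf Mop00 Mop01 Mop10 Mop11; ring. Qed.

Lemma Mpos X Z k : (forall s t, 0 <= qf X s t + k * qf Z s t) ->
  forall s t, 0 <= qf (Mop eta beta lambda X) s t + k * qf (Mop eta beta lambda Z) s t.
Proof.
move=> H s t; rewrite !qfM.
have h1 := H ((1-a)*s + a*t) (b*(t-s)); have h2 := H 1 0.
have h3 : 0 <= a^+2 * (s-t)^+2 * (qf X 1 0 + k * qf Z 1 0).
  by apply: mulr_ge0 => //; apply: mulr_ge0; apply: sqr_ge0.
have -> : X 0 0 = qf X 1 0 by rewrite /qf; ring.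
have -> : Z 0 0 = qf Z 1 0 by rewrite /qf; ring.
move: h1 h3; set u := qf X _ _ + _; move=> h1 h3.
have -> : qf X ((1 - a) * s + a * t) (b * (t - s)) + a ^+ 2 * qf X 1 0 * (s - t) ^+ 2 +
  k * (qf Z ((1 - a) * s + a * t) (b * (t - s)) + a ^+ 2 * qf Z 1 0 * (s - t) ^+ 2)
  = u + a^+2 * (s-t)^+2 * (qf X 1 0 + k * qf Z 1 0) by rewrite /u; ring.
lra.
Qed.

Definition k11 := (1+b)*(1-2%:R*b+2%:R*b^+2) + 2%:R*a*b.
Definition k12 := a*(1-2%:R*b^+2-2%:R*a).
Definition Dd := 2%:R*a*(1-b^+2-a).
Definition Zm := mx2 k11 k12 k12 (2%:R*a).

Lemma qfMZ s t : qf (Mop eta beta lambda Zm) s t = qf Zm s t - Dd * (s^+2 + t^+2).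
Proof. rewrite qfM /qf /Zm /k11 /k12 /Dd /mx2; mxs; ring. Qed.


Lemma Zpd : 0 < a -> 0 <= b -> b < 1 -> a < 1 - b^+2 ->
  0 < 2%:R*a*k11 - k12^+2.
Proof.
move=> ha hb0 hb1 hab; rewrite /k11 /k12.
have h1 : 1 <= 2%:R * ((1+b)*(1-2%:R*b+2%:R*b^+2) + 2%:R*a*b).
  have : 0 <= (1 - 2%:R*b)^+2 by apply: sqr_ge0.
  have : 0 <= b * (1-2%:R*b+2%:R*b^+2).
    apply: mulr_ge0 => //; have : 0 <= (1 - 2%:R*b)^+2 by apply: sqr_ge0. nra.
  have : 0 <= a * b by apply: mulr_ge0; lra.
  nra.
have h2 : (1-2%:R*b^+2-2%:R*a)^+2 < 1.
  have : 0 <= b^+2 by apply: sqr_ge0.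
  have : (1-2%:R*b^+2-2%:R*a)^+2 - 1 = (- 2%:R*b^+2-2%:R*a) * (2%:R - 2%:R*b^+2-2%:R*a) by ring.
  move=> e hb2; have : (- 2%:R*b^+2-2%:R*a) * (2%:R - 2%:R*b^+2-2%:R*a) < 0.
    rewrite -oppr_gt0 -mulNr; apply: mulr_gt0; lra.
  lra.
have h3 : a * (1-2%:R*b^+2-2%:R*a)^+2 < 1.
  have : a * (1-2%:R*b^+2-2%:R*a)^+2 <= a * 1 by apply: ler_wpM2l; lra.
  have : 0 <= b^+2 by apply: sqr_ge0.
  lra.
have -> : 2%:R * a * ((1 + b) * (1 - 2%:R * b + 2%:R * b ^+ 2) + 2%:R * a * b) -
  (a * (1 - 2%:R * b ^+ 2 - 2%:R * a)) ^+ 2 =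
  a * (2%:R * ((1 + b) * (1 - 2%:R * b + 2%:R * b ^+ 2) + 2%:R * a * b) - a * (1 - 2%:R * b ^+ 2 - 2%:R * a) ^+ 2) by ring.
apply: mulr_gt0 => //; lra.
Qed.

Lemma qfZ_sos s t : (k11 + 2%:R*a) * qf Zm s t - (2%:R*a*k11 - k12^+2) * (s^+2 + t^+2)
  = (k11 * s + k12 * t)^+2 + (k12 * s + 2%:R*a*t)^+2.
Proof. rewrite /qf /Zm /mx2; mxs; ring. Qed.

Lemma qfZ_sos2 s t : 2%:R*a * ((k11 + 2%:R*a) * (s^+2 + t^+2) - qf Zm s t)
  = (2%:R*a*s - k12*t)^+2 + (2%:R*a*k11 - k12^+2) * t^+2.
Proof. rewrite /qf /Zm /mx2; mxs; ring. Qed.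

Lemma qf_low (X : 'M[R]_2) s t : X 1 0 = X 0 1 ->
  - ((`|X 0 0| + `|X 0 1| + `|X 1 1|) * (s^+2 + t^+2)) <= qf X s t.
Proof.
move=> hs; rewrite /qf hs.
have nb : forall x : R, - `|x| <= x by move=> x; move: (lexx `|x|); rewrite ler_norml => /andP[].
have s2 := sqr_ge0 s; have t2 := sqr_ge0 t.
have h1 : 0 <= (X 0 0 + `|X 0 0|) * s^+2 by apply: mulr_ge0 => //; have := nb (X 0 0); lra.
have h2 : 0 <= (X 1 1 + `|X 1 1|) * t^+2 by apply: mulr_ge0 => //; have := nb (X 1 1); lra.
have h3 : 0 <= `|X 0 0| * t^+2 by apply: mulr_ge0.
have h4 : 0 <= `|X 1 1| * s^+2 by apply: mulr_ge0.
have h5 : 0 <= `|X 0 1| * (s^+2 + t^+2) + 2%:R * X 0 1 * s * t.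
  have [y0|y0] := leP 0 (X 0 1).
    rewrite ger0_norm //; have : 0 <= X 0 1 * (s + t)^+2 by apply: mulr_ge0 => //; apply: sqr_ge0.
    lra.
  rewrite ltr0_norm //; have : 0 <= - X 0 1 * (s - t)^+2 by apply: mulr_ge0; [lra|apply: sqr_ge0].
  lra.
lra.
Qed.




Lemma psd_pres X : 0 < a -> 0 <= b -> b < 1 -> a < 1 - b^+2 ->
  X^T = X -> psd2 (X - Mop eta beta lambda X) -> psd2 X.
Proof.
move=> ha hb0 hb1 hab hs hY.
have hs10 : X 1 0 = X 0 1 by have := congr1 (fun M : 'M[R]_2 => M 0 1) hs; rewrite mxE.
apply: psd2P => // s t.
have hYq := psd2_qf _ hY.
have qd : forall s t, qf (X - Mop eta beta lambda X) s t =
   qf X s t - qf (Mop eta beta lambda X) s t by move=> *; rewrite /qf !mxE; ring.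
have dtp := Zpd ha hb0 hb1 hab.
set dt := 2%:R*a*k11 - k12^+2 in dtp.
have k11p : 0 <= k11.
  rewrite /k11; have : 0 <= (1-b)^+2 + b^+2 by apply: addr_ge0; apply: sqr_ge0.
  have : 0 <= a * b by apply: mulr_ge0; lra.
  move=> h1 h2; have : 0 <= (1+b) * ((1-b)^+2 + b^+2) by apply: mulr_ge0 => //; lra.
  have -> : (1 + b) * ((1 - b) ^+ 2 + b ^+ 2) = (1+b)*(1-2%:R*b+2%:R*b^+2) by ring.
  lra.
set tr := k11 + 2%:R*a.
have trp : 0 < tr by rewrite /tr; lra.
have Ddp : 0 < Dd by rewrite /Dd; apply: mulr_gt0; lra.
have Ddtr : Dd <= tr.
  rewrite /Dd /tr; have : 0 <= a * (b^+2 + a) by apply: mulr_ge0; [lra|have := sqr_ge0 b; lra].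
  lra.
set th := 1 - Dd / tr.
have th0 : 0 <= th by rewrite /th subr_ge0 ler_pdivrMr // mul1r.
have th1 : th < 1.
  rewrite /th; have : 0 < Dd / tr by apply: divr_gt0.
  lra.
have qZ0 : forall s t, 0 <= qf Zm s t.
  move=> s' t'; have := qfZ_sos s' t'; rewrite -/tr -/dt => e.
  have : 0 <= (k11 * s' + k12 * t')^+2 + (k12 * s' + 2%:R*a*t')^+2 by apply: addr_ge0; apply: sqr_ge0.
  rewrite -e => h; have : 0 <= dt * (s'^+2 + t'^+2) by apply: mulr_ge0; [lra|apply: addr_ge0; apply: sqr_ge0].
  move=> h'; have : 0 <= tr * qf Zm s' t' by lra.
  by rewrite pmulr_rge0.
have qZtr : forall s t, qf Zm s t <= tr * (s^+2 + t^+2).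
  move=> s' t'; have := qfZ_sos2 s' t'; rewrite -/tr -/dt => e.
  have : 0 <= (2%:R*a*s' - k12*t')^+2 + dt * t'^+2 by apply: addr_ge0; [apply: sqr_ge0|apply: mulr_ge0; [lra|apply: sqr_ge0]].
  rewrite -e pmulr_rge0; [lra|lra].
set C := `|X 0 0| + `|X 0 1| + `|X 1 1|.
have C0 : 0 <= C by rewrite /C; apply: addr_ge0; [apply: addr_ge0|]; apply: normr_ge0.
set c := C * tr / dt.
have c0 : 0 <= c by rewrite /c; apply: divr_ge0; [apply: mulr_ge0; lra|lra].
have claim : forall n s t, 0 <= qf X s t + (c * th^+n) * qf Zm s t.
  elim => [|n IH] s' t'.
    rewrite expr0 mulr1.
    have h1 := qf_low _ s' t' hs10; rewrite -/C in h1.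
    have h2 : (s'^+2 + t'^+2) <= tr * qf Zm s' t' / dt.
      rewrite ler_pdivlMr //; have := qfZ_sos s' t'; rewrite -/tr -/dt => e.
      have : 0 <= (k11 * s' + k12 * t')^+2 + (k12 * s' + 2%:R*a*t')^+2 by apply: addr_ge0; apply: sqr_ge0.
      rewrite -e; lra.
    have h3 : C * (s'^+2 + t'^+2) <= C * (tr * qf Zm s' t' / dt) by apply: ler_wpM2l.
    have -> : c * qf Zm s' t' = C * (tr * qf Zm s' t' / dt) by rewrite /c; field; lra.
    lra.
  have k0 : 0 <= c * th ^+ n by apply: mulr_ge0 => //; apply: exprn_ge0.
  have h1 := Mpos _ _ _ IH s' t'.
  rewrite qfMZ in h1.
  have h2 := hYq s' t'; rewrite qd in h2.
  have h3 : 0 <= th * qf Zm s' t' - (qf Zm s' t' - Dd * (s'^+2 + t'^+2)).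
    have -> : th * qf Zm s' t' - (qf Zm s' t' - Dd * (s'^+2 + t'^+2)) =
       Dd / tr * (tr * (s'^+2 + t'^+2) - qf Zm s' t') by rewrite /th; field; lra.
    apply: mulr_ge0; first by apply: divr_ge0; lra.
    have := qZtr s' t'; lra.
  have h4 := mulr_ge0 k0 h3.
  rewrite exprSr.
  have -> : c * (th ^+ n * th) * qf Zm s' t' = c * th ^+ n * (th * qf Zm s' t') by ring.
  lra.
rewrite leNgt; apply/negP => hq.
have qZs := qZ0 s t.
have [cq0|cqp] := eqVneq (c * qf Zm s t) 0.
  have := claim 0%N s t; rewrite expr0 mulr1 cq0; lra.
have cqp' : 0 < c * qf Zm s t by rewrite lt_def cqp mulr_ge0.
have hq' : 0 < - qf X s t by lra.
have [n hn] := @geo_small R th _ th0 th1 (divr_gt0 hq' cqp').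
have := claim n s t.
rewrite ltr_pdivlMr // in hn.
have -> : c * th^+n * qf Zm s t = th^+n * (c * qf Zm s t) by ring.
lra.
Qed.


Lemma subE (A B : 'M[R]_2) i j : (A - B) i j = A i j - B i j.
Proof. by rewrite !mxE. Qed.

Lemma ord2 (i : 'I_2) : i = 0 \/ i = 1.
Proof. case: i => [[|[|i]] Hi]; [left|right|by []]; exact/val_inj. Qed.

Lemma mx2E (x y z w : R) : (mx2 x y z w) 0 0 = x /\ (mx2 x y z w) 0 1 = y /\
   (mx2 x y z w) 1 0 = z /\ (mx2 x y z w) 1 1 = w.
Proof. by rewrite /mx2 !mxE. Qed.

Definition fx (u w v : R) := (((1-b)^+2*(1+b) + 2%:R*a*b) * u + 2%:R*b*(b^+2-1+a) * w + b^+2*(1+b) * v) / Dd.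
Definition fy (u w v : R) := (a*(1-b^+2-2%:R*a) * u + 2%:R*a*(1-b^+2-a) * w - a*b^+2 * v) / Dd.
Definition fz (u w v : R) := (2%:R*a^+2 * u + 2%:R*a*(1-a) * v) / Dd.

Lemma solve_uniq X Y : Dd != 0 -> X^T = X -> X - Mop eta beta lambda X = Y ->
  [/\ X 0 0 = fx (Y 0 0) (Y 0 1) (Y 1 1), X 0 1 = fy (Y 0 0) (Y 0 1) (Y 1 1)
    & X 1 1 = fz (Y 0 0) (Y 0 1) (Y 1 1)].
Proof.
move=> hD hs hY.
have hs10 : X 1 0 = X 0 1 by have := congr1 (fun M : 'M[R]_2 => M 0 1) hs; rewrite mxE.
rewrite -hY !subE Mop00 Mop01 Mop11 hs10 /fx /fy /fz.
move: hD; rewrite /Dd; generalize (eta * lambda) => a0.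
rewrite !mulf_eq0 !negb_or => /andP[/andP[_ h1] h2].
by split; field; rewrite h1 h2.
Qed.

Lemma mx2_sym (x y z : R) : (mx2 x y y z)^T = mx2 x y y z.
Proof.
apply/matrixP => i j; rewrite !mxE.
by case: (ord2 i) => ->; case: (ord2 j) => ->.
Qed.

Lemma solve_ex Y : Dd != 0 -> Y^T = Y ->
  let X := mx2 (fx (Y 0 0) (Y 0 1) (Y 1 1)) (fy (Y 0 0) (Y 0 1) (Y 1 1))
               (fy (Y 0 0) (Y 0 1) (Y 1 1)) (fz (Y 0 0) (Y 0 1) (Y 1 1)) in
  X^T = X /\ X - Mop eta beta lambda X = Y.
Proof.
move=> hD hs X; split; first exact: mx2_sym.
have hs10 : Y 1 0 = Y 0 1 by have := congr1 (fun M : 'M[R]_2 => M 0 1) hs; rewrite mxE.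
have [e00 [e01 [e10 e11]]] := mx2E (fx (Y 0 0) (Y 0 1) (Y 1 1)) (fy (Y 0 0) (Y 0 1) (Y 1 1))
               (fy (Y 0 0) (Y 0 1) (Y 1 1)) (fz (Y 0 0) (Y 0 1) (Y 1 1)).
apply/matrixP => i j; rewrite subE.
have E : forall i j, Mop eta beta lambda X i j = Mop eta beta lambda X i j by [].
case: (ord2 i) => ->; case: (ord2 j) => ->;
  rewrite ?Mop00 ?Mop01 ?Mop10 ?Mop11 /X e00 e01 e10 e11 ?hs10 /fx /fy /fz;
  move: hD; rewrite /Dd; generalize (eta * lambda) => a0;
  rewrite !mulf_eq0 !negb_or => /andP[/andP[_ h1] h2];
  by field; rewrite h1 h2.
Qed.

End S.

Definition c2 {K : comNzRingType} (a b : K) := 1 + b + b^+2 - 2%:R*a - 2%:R*a*b + 2%:R*a^+2.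
Definition c1 {K : comNzRingType} (a b : K) := b + b^+2 + b^+3 - 2%:R*a*b - 2%:R*a*b^+2.
Definition c0 {K : comNzRingType} (a b : K) := b^+3.
Definition pr {K : comNzRingType} (a b t : K) := t^+3 - c2 a b * t^+2 + c1 a b * t - c0 a b.

Section Real.
Variable R : realType.
Variables a b : R.

Lemma pr_id t : pr a b t = (t-b)*(t-1)*(t-b^+2) + 2%:R*a*t*(t*(1+b-a) - b*(1+b)).
Proof. rewrite /pr /c2 /c1 /c0; ring. Qed.

Lemma pr_ge1 t : 0 < a -> 0 <= b -> b < 1 -> a < 1 - b^+2 -> 1 <= t -> 0 < pr a b t.
Proof.
move=> ha hb0 hb1 hab ht; rewrite pr_id.
have h1 : 0 <= (t-b)*(t-1)*(t-b^+2).
  have hb2 : b^+2 <= b by rewrite expr2; nra.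
  apply: mulr_ge0; [apply: mulr_ge0|]; lra.
have h2 : 0 < t*(1+b-a) - b*(1+b).
  have : 0 <= (t-1)*(1+b-a) by apply: mulr_ge0; nra.
  nra.
have h3 : 0 < 2%:R*a*t by apply: mulr_gt0; lra.
have := mulr_gt0 h3 h2. lra.
Qed.

Lemma pr_lem1 t : 0 < a -> 0 <= b -> b < 1 -> t <= -1 -> pr a b t < 0.
Proof.
move=> ha hb0 hb1 ht; rewrite pr_id.
set u := - t.
have hu : 1 <= u by rewrite /u; lra.
have -> : t = - u by rewrite /u opprK.
have e : (-u - b) * (-u - 1) * (-u - b^+2) + 2%:R*a*(-u)*((-u)*(1+b-a) - b*(1+b))
  = - ((u+b)*(u+1)*(u+b^+2)) + ((1+b)^+2*(u+b)^+2)/2%:R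
    - 2%:R * (a*u - (1+b)*(u+b)/2%:R)^+2.
  by field.
rewrite e.
have h1 : 0 < 2%:R*u^+2 + (1-b)^+2*u - b - b^+3 by nra.
have h2 : (1+b)^+2*(u+b)^+2/2%:R < (u+b)*(u+1)*(u+b^+2).
  have -> : (u+b)*(u+1)*(u+b^+2) = (1+b)^+2*(u+b)^+2/2%:R + (u+b) * (2%:R*u^+2 + (1-b)^+2*u - b - b^+3)/2%:R by field.
  have : 0 < (u+b) * (2%:R*u^+2 + (1-b)^+2*u - b - b^+3) by apply: mulr_gt0; lra.
  lra.
have : 0 <= (a*u - (1+b)*(u+b)/2%:R)^+2 by apply: sqr_ge0.
lra.
Qed.


Definition Pr (x y : R) := x^+3 - 3%:R*x*y^+2 - c2 a b * (x^+2 - y^+2) + c1 a b * x - c0 a b.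
Definition Qi (x y : R) := 3%:R*x^+2 - y^+2 - 2%:R*c2 a b*x + c1 a b.

Lemma cplx_case x y : 0 < a -> 0 <= b -> b < 1 -> y != 0 ->
  Pr x y = 0 -> Qi x y = 0 -> x^+2 + y^+2 < 1.
Proof.
move=> ha hb0 hb1 hy hP hQ.
set r := c2 a b - 2%:R * x; set m := x^+2 + y^+2.
have hy2 : 0 < y^+2 by rewrite lt_def sqr_ge0 andbT expf_eq0 /= hy.
have hm : 0 < m by rewrite /m; have := sqr_ge0 x; lra.
have e1 : c1 a b = m + 2%:R*x*r.
  have : c1 a b = m + 2%:R*x*r + Qi x y by rewrite /Qi /r /m; ring.
  by rewrite hQ addr0.
have e0 : c0 a b = r * m.
  have : c0 a b = r * m - Pr x y + x * Qi x y by rewrite /Pr /Qi /r /m; ring.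
  by rewrite hP hQ; lra.
have e2 : pr a b r = 0.
  have : pr a b r = (r - x) * Qi x y + Pr x y by rewrite /pr /Pr /Qi /r; ring.
  by rewrite hP hQ mulr0 addr0.
rewrite ltNge; apply/negP => hm1.
have hb3 : b^+3 = r * m by rewrite -e0.
have hr0 : 0 <= r.
  have : 0 <= b^+3 by apply: exprn_ge0.
  rewrite hb3 => h; rewrite -(pmulr_lge0 _ hm); lra.
have hr3 : r <= b^+3 by rewrite hb3; nra.
have [r0|rpos] := eqVneq r 0.
  have hb30 : b^+3 = 0 by rewrite hb3 r0 mul0r.
  have b0 : b = 0 by apply/eqP; move/eqP: hb30; rewrite expf_eq0.
  move: e1; rewrite /c1 b0 r0; lra.
have hr : 0 < r by rewrite lt_def rpos.
have hbp : 0 < b by rewrite lt_def; apply/andP; split => //; apply/eqP => b0; move: hr3; rewrite b0; lra.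
have hbb : b^+3 < b^+2 /\ b^+2 < b.
  have hb2p : 0 < b^+2 by apply: exprn_gt0.
  split; nra.
have : pr a b r < 0.
  have -> : pr a b r = (r-b)*((r-1)*(r-b^+2) + 2%:R*a*(1+b)*r) - 2%:R*a^+2*r^+2
    by rewrite /pr /c2 /c1 /c0; ring.
  have h1 : 0 <= (r-1)*(r-b^+2).
    have -> : (r-1)*(r-b^+2) = (1-r)*(b^+2-r) by ring.
    by apply: mulr_ge0; lra.
  have h2 : 0 < 2%:R*a*(1+b)*r by apply: mulr_gt0 => //; apply: mulr_gt0; lra.
  have h3 : (r-b)*((r-1)*(r-b^+2) + 2%:R*a*(1+b)*r) < 0.
    have -> : (r-b)*((r-1)*(r-b^+2) + 2%:R*a*(1+b)*r) = - ((b-r)*((r-1)*(r-b^+2) + 2%:R*a*(1+b)*r)) by ring.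
    rewrite oppr_lt0; apply: mulr_gt0; lra.
  have h4 : 0 <= 2%:R*a^+2*r^+2 by apply: mulr_ge0; [apply: mulr_ge0|apply: sqr_ge0]; lra || apply: sqr_ge0.
  lra.
lra.
Qed.
End Real.

Definition tf {K : comNzRingType} (a b : K) (i j : nat) : K :=
 match i, j with
 | O, O => (1-a)^+2 + a^+2 | O, S O => - (2%:R * (1-a) * b) | O, _ => b^+2
 | S O, O => (1-a)*a - a^+2 | S O, S O => (1-a)*b - b*a | S O, _ => - b^+2
 | _, O => 2%:R * a^+2 | _, S O => 2%:R * (a*b) | _, _ => b^+2 end.

Lemma symT (R : realType) (eta beta lambda : R) :
  sym_opmx (Mop eta beta lambda) = \matrix_(i < 3, j < 3) tf (eta * lambda) beta i j.
Proof.
apply/matrixP => i j; rewrite !mxE.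
case: i => [[|[|[|i]]] Hi] //; case: j => [[|[|[|j]]] Hj] //;
rewrite /sym_coord /sym_basis /= ?Mop00 ?Mop01 ?Mop10 ?Mop11; mxs; ring.
Qed.

Lemma det3 (R : comNzRingType) (g : nat -> nat -> R) :
  \det (\matrix_(i < 3, j < 3) g i j) =
  g 0%N 0%N * (g 1%N 1%N * g 2%N 2%N - g 1%N 2%N * g 2%N 1%N)
 - g 0%N 1%N * (g 1%N 0%N * g 2%N 2%N - g 1%N 2%N * g 2%N 0%N)
 + g 0%N 2%N * (g 1%N 0%N * g 2%N 1%N - g 1%N 1%N * g 2%N 0%N).
Proof.
rewrite (expand_det_row _ ord0) !big_ord_recl big_ord0 /cofactor.
rewrite !(expand_det_row _ ord0) !big_ord_recl !big_ord0 /cofactor.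
rewrite !det_mx11 !mxE /=.
rewrite !expr0 !expr1 /=. ring.
Qed.

Lemma charT_eval (K : comNzRingType) (a b z : K) :
  \det (\matrix_(i < 3, j < 3) (fun i' j' : nat => z *+ (i' == j')%N - tf a b i' j') i j) =
  z^+3 - c2 a b * z^+2 + c1 a b * z - c0 a b.
Proof. rewrite det3 /= /c2 /c1 /c0 ?mulr1n ?mulr0n. ring. Qed.

Lemma tf_C (R : realType) (a b : R) i j :
  ((tf a b i j)%:C)%C = tf (a%:C)%C (b%:C)%C i j.
Proof.
case: i => [|[|i]]; case: j => [|[|j]];
rewrite /tf !(rmorphB, rmorphD, rmorphM, rmorphN, rmorph1, rmorphXn, rmorph_nat) //.
Qed.

Lemma root_charC (R : realType) (eta beta lambda : R) (z : R[i]) :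
  root (char_poly (map_mx (fun x : R => x%:C%C) (sym_opmx (Mop eta beta lambda)))) z =
  (z^+3 - c2 ((eta*lambda)%:C)%C (beta%:C)%C * z^+2
     + c1 ((eta*lambda)%:C)%C (beta%:C)%C * z - c0 ((eta*lambda)%:C)%C (beta%:C)%C == 0).
Proof.
rewrite symT /root -horner_evalE /char_poly -det_map_mx.
rewrite -charT_eval; congr (\det _ == 0).
apply/matrixP => i j; rewrite !mxE /= -tf_C.
by rewrite /horner_eval hornerD hornerN hornerC hornerMn hornerX.
Qed.

Local Open Scope classical_set_scope.
Section Sup.
Variable R : realType.
Variable p : {poly R[i]}.
Hypothesis p0 : p != 0.

Local Notation S := [set Normc.normc z | z in [set z : R[i] | root p z]].

Lemma roots_seq : exists rs : seq R[i], forall z, root p z = (z \in rs).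
Proof.
have [rs Hp] := closed_field_poly_normal p.
exists rs => z; rewrite {1}Hp rootZ ?root_prod_XsubC //.
by rewrite lead_coef_eq0.
Qed.

Lemma S_bound : exists th : R, (forall y, S y -> y <= th) /\
   ((forall z, root p z -> Normc.normc z < 1) -> th < 1).
Proof.
have [rs Hrs] := roots_seq.
exists (foldr (fun w acc => Num.max (Normc.normc w) acc) 0 rs); split.
  move=> y [z /= + <-]; rewrite Hrs; elim: rs {Hrs} => //= w rs IH.
  by rewrite in_cons => /orP[/eqP ->|/IH h]; rewrite le_max ?lexx ?h ?orbT.
move=> H; have : forall w, w \in rs -> Normc.normc w < 1 by move=> w; rewrite -Hrs; apply: H.
elim: rs {Hrs} => /= [_|w rs IH h]; first by rewrite ltr01.
rewrite gt_max h ?mem_head ?IH // => w' hw'; by apply: h; rewrite in_cons hw' orbT.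
Qed.

Lemma sup_lt1 : (forall z, root p z -> Normc.normc z < 1) -> sup S < 1.
Proof.
move=> H; have [th [h1 h2]] := S_bound.
have [ne|e] := pselect (S !=set0).
  by apply: (le_lt_trans (ge_sup ne h1)); apply: h2.
have -> : S = set0 by apply/seteqP; split => x Sx //; exfalso; apply: e; exists x.
by rewrite sup0 ltr01.
Qed.

Lemma sup_ge z : root p z -> Normc.normc z <= sup S.
Proof.
move=> rz; have [th [h1 _]] := S_bound.
apply: ub_le_sup; first by exists th => y; apply: h1.
by exists z.
Qed.
End Sup.

Local Close Scope classical_set_scope.

Lemma cubic_parts (R : realType) (a b x y : R) :
  ((x +i* y) ^+ 3 - c2 (a%:C) (b%:C) * (x +i* y) ^+ 2 + c1 (a%:C) (b%:C) * (x +i* y)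
    - c0 (a%:C) (b%:C) = Pr R a b x y +i* (y * Qi R a b x y))%C.
Proof.
apply/eqP; rewrite eq_complex /c2 /c1 /c0 /Pr /Qi /c2 /c1 /c0 !exprS !expr0 /=.
by apply/andP; split; apply/eqP; ring.
Qed.

Lemma root_lt1 (R : realType) (a b x y : R) : 0 < a -> 0 <= b -> b < 1 -> a < 1 - b^+2 ->
  Pr R a b x y = 0 -> y * Qi R a b x y = 0 -> x^+2 + y^+2 < 1.
Proof.
move=> ha hb0 hb1 hab hP hQ.
have [y0|yn0] := eqVneq y 0; last first.
  have hQ' : Qi R a b x y = 0 by move/eqP: hQ; rewrite mulf_eq0 (negbTE yn0) /= => /eqP.
  apply: (@cplx_case R a b x y) => //. 
move: hP; rewrite y0 => hP.
have hp : pr a b x = 0 by rewrite -hP /Pr /pr; ring.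
have x1 : x < 1 by rewrite ltNge; apply/negP => h; have := @pr_ge1 R a b x ha hb0 hb1 hab h; lra.
have x2 : -1 < x by rewrite ltNge; apply/negP => h; have := @pr_lem1 R a b x ha hb0 hb1 h; lra.
have : 0 < (1 - x) * (1 + x) by apply: mulr_gt0; lra.
rewrite expr0n /=; nra.
Qed.

Lemma pr_big (R : realType) (a b : R) : 0 < a -> 0 <= b -> b < 1 ->
  0 < pr a b (2%:R + 16%:R * a^+2).
Proof.
move=> ha hb0 hb1; set t := 2%:R + 16%:R * a^+2.
have a2 : 0 <= a^+2 by apply: sqr_ge0.
have ht : 2%:R <= t by rewrite /t; lra.
have -> : pr a b t = (t-b)*(t-1)*(t-b^+2) + 2%:R*a*(1+b)*t*(t-b) - 2%:R*a^+2*t^+2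
  by rewrite /pr /c2 /c1 /c0; ring.
have hb2 : b^+2 <= b by nra.
have h1 : (t-1)*(t-1) <= (t-b)*(t-b^+2) by apply: ler_pM; lra.
have h2 : (t-1)^+3 <= (t-b)*(t-1)*(t-b^+2).
  have -> : (t-b)*(t-1)*(t-b^+2) = (t-1) * ((t-b)*(t-b^+2)) by ring.
  have -> : (t-1)^+3 = (t-1) * ((t-1)*(t-1)) by ring.
  by apply: ler_wpM2l; lra.
have h3 : 0 <= 2%:R*a*(1+b)*t*(t-b) by apply: mulr_ge0; [apply: mulr_ge0; [apply: mulr_ge0|]|]; lra.
have h4 : 0 < (t-1)^+3 - 2%:R*a^+2*t^+2.
  have -> : (t-1)^+3 - 2%:R*a^+2*t^+2 = 1 + 40%:R * a^+2 + 640%:R * (a^+2)^+2 + 3584%:R * (a^+2)^+3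
    by rewrite /t; ring.
  have : 0 <= (a^+2)^+2 by apply: sqr_ge0.
  have : 0 <= (a^+2)^+3 by apply: exprn_ge0.
  lra.
lra.
Qed.

Theorem lemmaA3 (R : realType) (eta beta lambda : R)
  (heta : 0 < eta) (hb0 : 0 <= beta) (hb1 : beta < 1)
  (hl : 0 < eta * lambda) :
  (* (a) *)
  (op_spectral_radius (Mop eta beta lambda) < 1
     <-> eta * lambda < 1 - beta ^+ 2) /\
  (* (b) Id - M invertible on S^2, and (Id - M)^{-1}(S^2_+) ⊆ S^2_+ *)
  (eta * lambda < 1 - beta ^+ 2 ->
     (forall Y : 'M[R]_2, sym2 Y ->
        exists! X : 'M[R]_2, sym2 X /\ X - Mop eta beta lambda X = Y) /\
     (forall X : 'M[R]_2, sym2 X ->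
        psd2 (X - Mop eta beta lambda X) -> psd2 X)) /\
  (* (c) Y := (Id - M)^{-1} Q is PSD with Y_11 = gamma *)
  (eta * lambda < 1 - beta ^+ 2 ->
     forall Y : 'M[R]_2, sym2 Y -> Y - Mop eta beta lambda Y = Qmx R ->
       psd2 Y /\
       Y 0 0 = (1 + beta) /
               (2 * eta * lambda * (1 - beta ^+ 2 - eta * lambda))).
Proof.
rewrite /op_spectral_radius /spectral_radius.
set p := char_poly _.
have p0 : p != 0 by apply: monic_neq0; apply: char_poly_monic.
have croot : forall x y : R, root p (x +i* y)%C <->
    (Pr R (eta*lambda) beta x y = 0 /\ y * Qi R (eta*lambda) beta x y = 0).
  move=> x y; rewrite /p root_charC cubic_parts eq_complex /=.
  by split => [/andP[/eqP h1 /eqP h2]|[h1 h2]]; [split|rewrite h1 h2 eqxx].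
have hD : forall hab : eta * lambda < 1 - beta ^+ 2, Dd R eta beta lambda != 0.
  move=> hab; rewrite /Dd; apply: lt0r_neq0; apply: mulr_gt0; lra.
split.
  split => [hsr|hab].
    rewrite ltNge; apply/negP => hge.
    pose P : {poly R} := 'X^3 - (c2 (eta*lambda) beta)%:P * 'X^2
       + (c1 (eta*lambda) beta)%:P * 'X - (c0 (eta*lambda) beta)%:P.
    have hP : forall t, P.[t] = pr (eta*lambda) beta t.
      by move=> t; rewrite /P /pr !hornerE.
    have hK := @pr_big R (eta*lambda) beta hl hb0 hb1.
    have h1 : P.[1] <= 0.
      rewrite hP; have -> : pr (eta * lambda) beta 1 = 2%:R * (eta*lambda) * (1 - beta^+2 - eta*lambda)
        by rewrite /pr /c2 /c1 /c0; ring.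
      rewrite pmulr_rle0; [lra|]. apply: mulr_gt0; lra.
    have [r hr rr] : {x | x \in `[1, 2%:R + 16%:R * (eta*lambda)^+2] & root P x}.
      apply: polyrcf.poly_ivt; first by have := sqr_ge0 (eta*lambda); lra.
      rewrite (hP (2%:R + _)); apply: mulr_le0_ge0 => //; lra.
    have r1 : 1 <= r by move: hr; rewrite in_itv /= => /andP[].
    have rz : pr (eta*lambda) beta r = 0 by rewrite -hP; apply/eqP.
    have : root p (r +i* 0)%C.
      apply/croot; split; last by rewrite mul0r.
      have -> : Pr R (eta*lambda) beta r 0 = pr (eta*lambda) beta r by rewrite /Pr /pr; ring.
      exact: rz.
    move/(@sup_ge R p p0) => /=.
    rewrite expr0n /= addr0 sqrtr_sqr ger0_norm; last by lra.
    lra.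
  apply: (@sup_lt1 R p p0) => -[x y] /croot [hP hQ] /=.
  rewrite -sqrtr1 ltr_sqrt ?ltr01 //.
  exact: (@root_lt1 R (eta*lambda) beta x y hl hb0 hb1 hab hP hQ).
split.
  move=> hab; split.
    move=> Y hY.
    have [hXs hXe] := @solve_ex R eta beta lambda Y (hD hab) hY.
    eexists; split; first by split; [exact: hXs| exact: hXe].
    move=> X' [hs' he'].
    have [e1 e2 e3] := @solve_uniq R eta beta lambda X' Y (hD hab) hs' he'.
    have e4 : X' 1 0 = X' 0 1 by have := congr1 (fun M : 'M[R]_2 => M 0 1) hs'; rewrite mxE.
    have [f00 [f01 [f10 f11]]] := mx2E R (fx R eta beta lambda (Y 0 0) (Y 0 1) (Y 1 1)) (fy R eta beta lambda (Y 0 0) (Y 0 1) (Y 1 1))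
               (fy R eta beta lambda (Y 0 0) (Y 0 1) (Y 1 1)) (fz R eta beta lambda (Y 0 0) (Y 0 1) (Y 1 1)).
    apply/matrixP => i j; case: (ord2 i) => ->; case: (ord2 j) => ->.
    - by rewrite f00 e1.
    - by rewrite f01 e2.
    - by rewrite f10 e4 e2.
    - by rewrite f11 e3.
  move=> X hs hY; exact: (@psd_pres R eta beta lambda X hl hb0 hb1 hab hs hY).
move=> hab Y hs hY; split.
  apply: (@psd_pres R eta beta lambda Y hl hb0 hb1 hab hs); rewrite hY.
  apply: psd2P; first by rewrite /Qmx mx2_sym.
  move=> s t; rewrite /qf /Qmx; have [f00 [f01 [f10 f11]]] := mx2E R (1 : R) (-1) (-1) 1.
  rewrite f00 f01 f10 f11.
  have -> : 1 * s ^+ 2 + (-1 + -1) * s * t + 1 * t ^+ 2 = (s - t)^+2 by ring.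
  exact: sqr_ge0.
have [e1 _ _] := @solve_uniq R eta beta lambda Y _ (hD hab) hs hY.
rewrite e1 /Qmx; have [f00 [f01 [f10 f11]]] := mx2E R (1 : R) (-1) (-1) 1.
rewrite f00 f01 f11 /fx /Dd.
have -> : 2 * eta * lambda = 2 * (eta * lambda) :> R by rewrite mulrA.
move: (hD hab); rewrite /Dd; generalize (eta * lambda) => a0.
rewrite !mulf_eq0 !negb_or => /andP[/andP[_ h1] h2].
by field; rewrite h1 h2.
Qed.
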